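(* Assume the standing hypotheses (H). If $A\subseteq V(G)$ is a stable set such that $\bigcap_{v\in A}L(v)\neq\varnothing$, then \[\left\lceil\frac{|V(G-A)|+\chi(G-A)-1}{3}\right\rceil=\left\lceil\frac{n+k-1}{3}\right\rceil.\]
   Context: A list assignment $L$ assigns to each vertex $v$ a set $L(v)$ of colors; an $L$-coloring is a proper coloring $f$ with $f(v)\in L(v)$ for all $v$; $\mathrm{ch}$ denotes choice number and $\chi$ chromatic number. A part of a complete multipartite graph is one of its maximal stable sets. Standing hypotheses (H): $k\ge1$ and $n\ge 2k+2$ are integers; $G$ is a complete $k$-partite graph (exactly $k$ nonempty parts) on $n$ vertices; $L$ is a list assignment for $G$ with $|L(v)|\ge\lceil (n+k-1)/3\rceil$ for every vertex $v$; $G$ has no $L$-coloring; $\left|\bigcup_{v\in V(G)}L(v)\right|\le n-1$; and every graph $H$ with fewer than $n$ vertices satisfies $\mathrm{ch}(H)\le\max\{\chi(H),\lceil(|V(H)|+\chi(H)-1)/3\rceil\}$. *)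

(* Defs.v *)
From mathcomp Require Import all_boot.
Set Implicit Arguments. Unset Strict Implicit. Unset Printing Implicit Defensive.

Definition simple_graph (T : finType) (e : rel T) : Prop :=
  irreflexive e /\ symmetric e.

Definition proper_on (T : finType) (C : Type) (e : rel T) (S : {set T}) (f : T -> C) : Prop :=
  forall x y, x \in S -> y \in S -> x != y -> e x y -> f x <> f y.

Definition colorableb (T : finType) (e : rel T) (S : {set T}) (c : nat) : bool :=
  [exists f : {ffun T -> 'I_c},
     [forall x in S, forall y in S, ((x != y) && e x y) ==> (f x != f y)]].

Lemma colorable_exists (T : finType) (e : rel T) (S : {set T}) :
  exists c, colorableb e S c.
Proof.
exists #|T|; apply/existsP; exists [ffun x => enum_rank x].
apply/forallP => x; apply/implyP => _; apply/forallP => y; apply/implyP => _.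
apply/implyP => /andP [nxy _]; rewrite !ffunE.
by rewrite (inj_eq enum_rank_inj).
Qed.

Definition chi (T : finType) (e : rel T) (S : {set T}) : nat :=
  ex_minn (colorable_exists e S).

(* list assignments: L : T -> seq nat; |L(v)| = number of distinct colours *)
Definition lsize (s : seq nat) : nat := size (undup s).

Definition L_colorable (T : finType) (e : rel T) (L : T -> seq nat) : Prop :=
  exists f : T -> nat, (forall v, f v \in L v) /\ proper_on e [set: T] f.

Definition choosable (T : finType) (e : rel T) (k : nat) : Prop :=
  forall L : T -> seq nat, (forall v, k <= lsize (L v)) -> L_colorable e L.

(* ch(T,e) <= m, with ch = min { k | k-choosable } *)
Definition ch_le (T : finType) (e : rel T) (m : nat) : Prop :=
  exists2 k, k <= m & choosable e k.

Definition ceil3 (a : nat) : nat := (a + 2) %/ 3.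

(* ceil((a + b - 1)/3); when a + b = 0 this is 0 = ceil(-1/3) *)
Definition bound3 (a b : nat) : nat := ceil3 (a + b).-1.

Definition union_size (T : finType) (L : T -> seq nat) : nat :=
  size (undup (flatten [seq L v | v <- enum T])).

(* Main.v *)
Require Import Defs.
From mathcomp Require Import all_boot.
From mathcomp Require Import zify.
Set Implicit Arguments. Unset Strict Implicit.

Lemma chi_le (T : finType) (e : rel T) S m : colorableb e S m -> chi e S <= m.
Proof. rewrite /chi; case: ex_minnP => m0 _ H; exact: H. Qed.

Lemma chi_col (T : finType) (e : rel T) S : colorableb e S (chi e S).
Proof. rewrite /chi; by case: ex_minnP. Qed.

Lemma col_sub (T : finType) (e : rel T) (S S' : {set T}) m : S' \subset S ->
  colorableb e S m -> colorableb e S' m.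
Proof.
move=> sub /existsP [f /forallP Hf]; apply/existsP; exists f.
apply/forallP => x; apply/implyP => xS; apply/forallP => y; apply/implyP => yS.
have := Hf x; rewrite (subsetP sub _ xS) /= => /forallP /(_ y).
by rewrite (subsetP sub _ yS).
Qed.

Lemma chi_mono (T : finType) (e : rel T) (S S' : {set T}) : S' \subset S -> chi e S' <= chi e S.
Proof. move=> sub; apply: chi_le; apply: (col_sub sub); exact: chi_col. Qed.

Lemma chi_lek (T : finType) (e : rel T) k (p : T -> 'I_k) S :
  (forall x y, e x y = (p x != p y)) -> chi e S <= k.
Proof.
move=> hG; apply: chi_le; apply/existsP; exists [ffun x => p x].
apply/forallP => x; apply/implyP => _; apply/forallP => y; apply/implyP => _.
by apply/implyP => /andP [_]; rewrite hG !ffunE.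
Qed.

Lemma lsize_filter (s : seq nat) c : (lsize s).-1 <= lsize [seq x <- s | x != c].
Proof.
rewrite /lsize -filter_undup size_filter.
have := count_predC (fun x => x != c) (undup s).
have : count (predC (fun x => x != c)) (undup s) <= 1.
  have -> : count (predC (fun x => x != c)) (undup s) = count_mem c (undup s).
    by apply: eq_count => x /=; rewrite negbK eq_sym.
  by rewrite count_uniq_mem ?undup_uniq //; case: (c \in _).
lia.
Qed.

Lemma lower
  (n k : nat) (T : finType) (e : rel T) (p : T -> 'I_k) (L : T -> seq nat)
  (hk : 1 <= k) (hn : 2 * k + 2 <= n) (hT : #|T| = n)
  (hG : forall x y, e x y = (p x != p y))
  (hL : forall v, ceil3 (n + k).-1 <= lsize (L v))
  (hnoc : ~ L_colorable e L)
  (hmin : forall (T' : finType) (e' : rel T'), simple_graph e' -> #|T'| < n ->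
            ch_le e' (maxn (chi e' [set: T']) (bound3 #|T'| (chi e' [set: T']))))
  (A : {set T})
  (hA : forall x y, x \in A -> y \in A -> ~~ e x y)
  c0 (hc0 : forall v, v \in A -> c0 \in L v) (hAn : A != set0) :
  ceil3 (n + k).-1 <= bound3 #|~: A| (chi e (~: A)).
Proof.
rewrite leqNgt; apply/negP => hlt; apply: hnoc.
pose T' : finType := {x : T | x \in ~: A}.
pose e' := fun x y : T' => e (val x) (val y).
have sg : simple_graph e'.
  split; first by move=> x; rewrite /e' hG eqxx.
  by move=> x y; rewrite /e' !hG eq_sym.
have cardT' : #|T'| = #|~: A|.
  by rewrite card_sig; apply: eq_card => x.
have ltn' : #|T'| < n.
  rewrite cardT' -hT cardsCs setCK.
  case/set0Pn: hAn => a aA.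
  have : 0 < #|A| by apply/card_gt0P; exists a.
  have : #|A| <= #|T| by apply: max_card.
  lia.
have chi'1 : chi e' [set: T'] <= chi e (~: A).
  apply: chi_le; case/existsP: (chi_col e (~: A)) => f /forallP Hf.
  apply/existsP; exists [ffun x : T' => f (val x)].
  apply/forallP => x; apply/implyP => _; apply/forallP => y; apply/implyP => _.
  apply/implyP => /andP [nxy exy]; rewrite !ffunE.
  have := Hf (val x); rewrite (valP x) /= => /forallP /(_ (val y)).
  by move: exy; rewrite /e' (valP y) /= (inj_eq val_inj) nxy => ->.
have chi'k : chi e' [set: T'] <= k.
  apply: (chi_lek (p := fun x : T' => p (val x))) => x y; exact: hG.
have [k0 hk0 hch] := hmin T' e' sg ltn'.
pose L' := fun x : T' => [seq c <- L (val x) | c != c0].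
have hL' : forall x, k0 <= lsize (L' x).
  move=> x; apply: (leq_trans hk0); apply: (leq_trans _ (lsize_filter _ _)).
  have := hL (val x).
  have : bound3 #|T'| (chi e' [set: T']) <= bound3 #|~: A| (chi e (~: A)).
    rewrite /bound3 /ceil3 cardT'; apply: leq_div2r; lia.
  rewrite /bound3 /ceil3 in hlt *.
  move: hlt; rewrite geq_max. lia.
have [f' [f'L f'P]] := hch L' hL'.
exists (fun v => if insub v is Some x then f' (x : T') else c0); split.
  move=> v; case: insubP => [x _ <-|].
    by have := f'L x; rewrite mem_filter => /andP [].
  by rewrite inE negbK; apply: hc0.
move=> x y _ _ nxy exy.
case: insubP => [x' x'A ex|xA]; case: insubP => [y' y'A ey|yA].
- subst x y; apply: f'P => //; by rewrite (inj_eq val_inj) in nxy.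
- subst x; move: yA; rewrite inE negbK => yA h; have := f'L x'; by rewrite mem_filter h eqxx.
- subst y; move: xA; rewrite inE negbK => xA h; have := f'L y'; by rewrite mem_filter -h eqxx.
- move: xA yA; rewrite !inE !negbK => xA yA; by have := hA _ _ xA yA; rewrite exy.
Qed.

Theorem proposition10
  (n k : nat) (T : finType) (e : rel T) (p : T -> 'I_k) (L : T -> seq nat)
  (hk : 1 <= k) (hn : 2 * k + 2 <= n) (hT : #|T| = n)
  (hG : forall x y, e x y = (p x != p y))
  (hp : forall i : 'I_k, exists v, p v = i)
  (hL : forall v, ceil3 (n + k).-1 <= lsize (L v))
  (hnoc : ~ L_colorable e L)
  (hunion : union_size L <= n.-1)
  (hmin : forall (T' : finType) (e' : rel T'), simple_graph e' -> #|T'| < n ->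
            ch_le e' (maxn (chi e' [set: T']) (bound3 #|T'| (chi e' [set: T']))))
  (A : {set T})
  (hA : forall x y, x \in A -> y \in A -> ~~ e x y)
  (hAL : exists c, forall v, v \in A -> c \in L v) :
  bound3 #|~: A| (chi e (~: A)) = ceil3 (n + k).-1.
Proof.
apply/eqP; rewrite eqn_leq; apply/andP; split.
  have := chi_lek (~: A) hG; have : #|~: A| <= n by rewrite -hT max_card.
  rewrite /bound3 /ceil3 => h1 h2; apply: leq_div2r; lia.
have [An|An] := eqVneq A set0; last first.
  by case: hAL => c hc; apply: (lower hk hn hT hG hL hnoc hmin hA hc An).
have [v0 _] : exists v0 : T, true.
  have : 0 < #|T| by lia.
  by case/card_gt0P => v _; exists v.
have : 0 < lsize (L v0).
  have := hL v0; rewrite /ceil3; lia.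
rewrite /lsize; case E: (undup (L v0)) => [|c0 s] //= _.
have c0L : c0 \in L v0 by rewrite -mem_undup E inE eqxx.
have hA' : forall x y, x \in [set v0] -> y \in [set v0] -> ~~ e x y.
  by move=> x y; rewrite !inE => /eqP -> /eqP ->; rewrite hG eqxx.
have hc' : forall v, v \in [set v0] -> c0 \in L v by move=> v; rewrite inE => /eqP ->.
have hne : [set v0] != set0 by apply/set0Pn; exists v0; rewrite inE.
have := lower hk hn hT hG hL hnoc hmin hA' hc' hne.
move=> h; apply: (leq_trans h); rewrite /bound3 /ceil3 An.
have : #|~: [set v0]| <= #|~: (set0 : {set T})| by apply: subset_leq_card; rewrite setC0 subsetT.
have : chi e (~: [set v0]) <= chi e (~: set0) by apply: chi_mono; rewrite setC0 subsetT.
move=> h1 h2; apply: leq_div2r; lia.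
Qed.
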